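(* Let $u$ be the solution of the Cauchy problem in the context. If $\sigma\ge m_0f_0+m_1f_1$, then \[ \partial_xu(x,t)\le\frac{2}{1-x+e^{-(\sigma-m_0f_0)t}}\,e^{-m_1f_1t} \] for all $x\in[0,1]$ and $t\ge0$.
   Context: Constants: $f_0>0$, $f_1\ge0$ with $\sigma=f_0-f_1>0$; $\lambda_0,\lambda_1\ge0$; $\gamma_0,\gamma_1\in(0,1]$; $m_0=\lambda_0\gamma_0$, $m_1=\lambda_1\gamma_1$. With $\mathcal{J}_0u(x,t)=u(x+\gamma_0(1-x),t)-u(x,t)$ and $\mathcal{J}_1u(x,t)=u(x-\gamma_1x,t)-u(x,t)$, $u$ is the unique (mild) solution, which is $C^\infty$ on $[0,1]\times[0,\infty)$, of \[ \partial_tu+\sigma(1-x)x\,\partial_xu=\lambda_0f_0\mathcal{J}_0u+\lambda_1f_1\mathcal{J}_1u\ (0\le x\le1,\ t>0),\quad u(x,0)=x. \] *)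

(* Defs.v *)
From Stdlib Require Import Reals.
From Coquelicot Require Import Coquelicot.
Open Scope R_scope.

Definition dx (u : R -> R -> R) (x t : R) : R := Derive (fun y => u y t) x.
Definition dt (u : R -> R -> R) (x t : R) : R := Derive (fun s => u x s) t.

Definition continuous2 (f : R -> R -> R) (x t : R) : Prop :=
  forall eps : R, 0 < eps -> exists delta : R, 0 < delta /\
    forall y s : R, Rabs (y - x) < delta -> Rabs (s - t) < delta ->
      Rabs (f y s - f x t) < eps.

Definition C1_2 (u : R -> R -> R) : Prop :=
  forall x t : R,
    ex_derive (fun y => u y t) x /\ ex_derive (fun s => u x s) t /\
    continuous2 (dx u) x t /\ continuous2 (dt u) x t.

Definition J0 (g0 : R) (u : R -> R -> R) (x t : R) : R :=
  u (x + g0 * (1 - x)) t - u x t.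
Definition J1 (g1 : R) (u : R -> R -> R) (x t : R) : R :=
  u (x - g1 * x) t - u x t.

(* u is a classical solution of the Cauchy problem
   d_t u + sigma (1-x) x d_x u = l0 f0 J0 u + l1 f1 J1 u, 0<=x<=1, t>0,
   u(x,0) = x, with sigma = f0 - f1. *)
Definition is_solution (f0 f1 l0 l1 g0 g1 : R) (u : R -> R -> R) : Prop :=
  C1_2 u /\
  (forall x, 0 <= x <= 1 -> u x 0 = x) /\
  (forall x t, 0 <= x <= 1 -> 0 < t ->
     dt u x t + (f0 - f1) * (1 - x) * x * dx u x t =
       l0 * f0 * J0 g0 u x t + l1 * f1 * J1 g1 u x t).

(* Main.v *)
Require Import Defs.
From Stdlib Require Import Reals Lra Classical ClassicalEpsilon.
From Coquelicot Require Import Coquelicot.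
Open Scope R_scope.

Lemma cpt_ed (f : R -> R) x : continuity_pt f x ->
  forall eps, 0 < eps -> exists d, 0 < d /\ forall y, Rabs (y - x) < d -> Rabs (f y - f x) < eps.
Proof.
  intros H eps He. destruct (H eps He) as [d [Hd H']]. exists d; split; auto.
  intros y Hy. destruct (Req_dec x y) as [<-|Hn].
  - rewrite Rminus_diag, Rabs_R0; auto.
  - apply (H' y). split. split; [exact I| exact Hn]. simpl. unfold R_dist. exact Hy.
Qed.

Lemma ed_cpt (f : R -> R) x : 
  (forall eps, 0 < eps -> exists d, 0 < d /\ forall y, Rabs (y - x) < d -> Rabs (f y - f x) < eps)
  -> continuity_pt f x.
Proof.
  intros H eps He. destruct (H eps He) as [d [Hd H']]. exists d; split; auto.
  intros y [_ Hy]. simpl in *. unfold R_dist in *. apply H'. exact Hy.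
Qed.

Lemma exd_cont (f : R -> R) x : ex_derive f x -> continuity_pt f x.
Proof.
  intros [l H]. apply is_derive_Reals in H. exact (derivable_continuous_pt f x (exist _ l H)).
Qed.

Lemma cont2_of (f : R -> R -> R) x t : continuous2 f x t -> continuity_2d_pt f x t.
Proof.
  intros H eps. destruct (H eps (cond_pos eps)) as [d [Hd H']].
  exists (mkposreal d Hd). intros u v Hu Hv. apply H'; auto.
Qed.

Lemma c2_ed (f : R -> R -> R) x t : continuity_2d_pt f x t ->
  forall eps, 0 < eps -> exists d, 0 < d /\ forall y s, Rabs (y - x) < d -> Rabs (s - t) < d ->
   Rabs (f y s - f x t) < eps.
Proof.
  intros H eps He. destruct (H (mkposreal eps He)) as [d H']. exists d; split.
  apply cond_pos. intros; apply H'; auto.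
Qed.

Lemma ed_c2 (f : R -> R -> R) x t : 
  (forall eps, 0 < eps -> exists d, 0 < d /\ forall y s, Rabs (y - x) < d -> Rabs (s - t) < d ->
   Rabs (f y s - f x t) < eps) -> continuity_2d_pt f x t.
Proof.
  intros H eps. destruct (H eps (cond_pos eps)) as [d [Hd H']].
  exists (mkposreal d Hd). intros u v Hu Hv. apply H'; auto.
Qed.

Lemma mvt_all (f : R -> R) a b :
  (forall z, ex_derive f z) -> exists c, Rmin a b <= c <= Rmax a b /\
     f b - f a = Derive f c * (b - a).
Proof.
  intros H. apply (MVT_gen f a b (Derive f)).
  - intros; apply Derive_correct, H.
  - intros; apply exd_cont, H.
Qed.

Lemma minmax_dist a b c : Rmin a b <= c <= Rmax a b -> Rabs (c - a) <= Rabs (b - a).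
Proof.
  unfold Rmin, Rmax; destruct (Rle_dec a b); intros [H1 H2];
  unfold Rabs; repeat destruct Rcase_abs; lra.
Qed.

Lemma u_cont u : C1_2 u -> forall x t, continuity_2d_pt u x t.
Proof.
  intros HC x t. apply ed_c2. intros eps He.
  destruct (HC x t) as [_ [Ht [Hdx _]]].
  destruct (Hdx 1 Rlt_0_1) as [d1 [Hd1 H1]].
  pose proof (exd_cont _ _ Ht) as Hct.
  destruct (cpt_ed _ _ Hct (eps/2) ltac:(lra)) as [d2 [Hd2 H2]].
  set (M := Rabs (dx u x t) + 1).
  assert (HM : 0 < M) by (unfold M; pose proof (Rabs_pos (dx u x t)); lra).
  exists (Rmin d1 (Rmin d2 (eps / (2 * M)))). split.
  { repeat apply Rmin_pos; auto. apply Rdiv_lt_0_compat; lra. }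
  intros y s Hy Hs.
  assert (Hy1 : Rabs (y - x) < d1) by (eapply Rlt_le_trans; [exact Hy| apply Rmin_l]).
  assert (Hs1 : Rabs (s - t) < d1) by (eapply Rlt_le_trans; [exact Hs| apply Rmin_l]).
  assert (Hs2 : Rabs (s - t) < d2) by (eapply Rlt_le_trans; [exact Hs| eapply Rle_trans; [apply Rmin_r| apply Rmin_l]]).
  assert (Hy3 : Rabs (y - x) < eps / (2*M)) by (eapply Rlt_le_trans; [exact Hy| eapply Rle_trans; [apply Rmin_r| apply Rmin_r]]).
  destruct (mvt_all (fun z => u z s) x y (fun z => proj1 (HC z s))) as [c [Hc Hm]].
  pose proof (minmax_dist _ _ _ Hc) as Hcd.
  assert (Hb : Rabs (dx u c s - dx u x t) < 1) by (apply H1; lra).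
  assert (HB : Rabs (dx u c s) <= M).
  { unfold M. pose proof (Rabs_triang (dx u c s - dx u x t) (dx u x t)).
    replace (dx u c s - dx u x t + dx u x t) with (dx u c s) in H by ring. lra. }
  specialize (H2 s Hs2).
  replace (u y s - u x t) with ((u y s - u x s) + (u x s - u x t)) by ring.
  eapply Rle_lt_trans; [apply Rabs_triang|].
  rewrite Hm. unfold dx in HB. rewrite Rabs_mult.
  assert (Rabs (Derive (fun z : R => u z s) c) * Rabs (y - x) <= M * Rabs (y-x)).
  { apply Rmult_le_compat_r; [apply Rabs_pos| exact HB]. }
  assert (M * Rabs (y - x) <= M * (eps / (2*M))).
  { apply Rmult_le_compat_l; lra. }
  replace (M * (eps / (2*M))) with (eps/2) in H0 by (field; lra).
  lra.
Qed.

Lemma chain u X s X' : C1_2 u -> is_derive X s X' ->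
  is_derive (fun t => u (X t) t) s (dx u (X s) s * X' + dt u (X s) s).
Proof.
  intros HC HX. apply is_derive_Reals. apply is_derive_Reals in HX.
  set (x0 := X s). destruct (HC x0 s) as [_ [Ht [Hdx _]]].
  assert (HT : derivable_pt_lim (fun r => u x0 r) s (dt u x0 s)).
  { apply is_derive_Reals. apply Derive_correct. exact Ht. }
  set (D0 := dx u x0 s). set (T0 := dt u x0 s).
  intros eps He.
  set (K := Rabs X' + Rabs D0 + 2).
  assert (HK : 0 < K) by (unfold K; pose proof (Rabs_pos X'); pose proof (Rabs_pos D0); lra).
  set (eta := Rmin 1 (eps / K)).
  assert (Heta : 0 < eta) by (apply Rmin_pos; [lra| apply Rdiv_lt_0_compat; lra]).
  assert (Heta1 : eta <= 1) by apply Rmin_l.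
  assert (HetaK : eta * K <= eps).
  { unfold eta. apply Rle_trans with (eps / K * K). apply Rmult_le_compat_r; [lra| apply Rmin_r].
    right; field; lra. }
  destruct (HX eta Heta) as [d1 H1].
  destruct (HT eta Heta) as [d2 H2].
  destruct (Hdx eta Heta) as [d3 [Hd3 H3]].
  set (L := Rabs X' + 1).
  assert (HL : 0 < L) by (unfold L; pose proof (Rabs_pos X'); lra).
  assert (Hd : 0 < Rmin (Rmin d1 d2) (Rmin d3 (d3 / L))).
  { repeat apply Rmin_pos; try apply cond_pos; auto. apply Rdiv_lt_0_compat; lra. }
  exists (mkposreal _ Hd). intros h Hh0 Hh. simpl in Hh.
  assert (Hh1 : Rabs h < d1) by (eapply Rlt_le_trans; [exact Hh| eapply Rle_trans; [apply Rmin_l| apply Rmin_l]]).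
  assert (Hh2 : Rabs h < d2) by (eapply Rlt_le_trans; [exact Hh| eapply Rle_trans; [apply Rmin_l| apply Rmin_r]]).
  assert (Hh3 : Rabs h < d3) by (eapply Rlt_le_trans; [exact Hh| eapply Rle_trans; [apply Rmin_r| apply Rmin_l]]).
  assert (Hh4 : Rabs h < d3 / L) by (eapply Rlt_le_trans; [exact Hh| eapply Rle_trans; [apply Rmin_r| apply Rmin_r]]).
  specialize (H1 h Hh0 Hh1). specialize (H2 h Hh0 Hh2).
  fold x0 in H1. fold T0 in H2.
  set (Q := (X (s + h) - x0) / h) in *.
  set (Rq := (u x0 (s + h) - u x0 s) / h) in *.
  assert (HQ : Rabs Q <= L).
  { unfold L. pose proof (Rabs_triang (Q - X') X'). replace (Q - X' + X') with Q in H by ring. lra. }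
  assert (HXd : Rabs (X (s + h) - x0) <= L * Rabs h).
  { replace (X (s + h) - x0) with (Q * h) by (unfold Q; field; auto).
    rewrite Rabs_mult. apply Rmult_le_compat_r; [apply Rabs_pos| exact HQ]. }
  destruct (mvt_all (fun z => u z (s + h)) x0 (X (s + h)) (fun z => proj1 (HC z (s + h)))) as [c [Hc Hm]].
  pose proof (minmax_dist _ _ _ Hc) as Hcd.
  assert (Hcx : Rabs (c - x0) < d3).
  { apply Rle_lt_trans with (L * Rabs h). lra.
    apply Rlt_le_trans with (L * (d3 / L)). apply Rmult_lt_compat_l; auto. right; field; lra. }
  assert (Hsh : Rabs (s + h - s) < d3) by (replace (s + h - s) with h by ring; auto).
  specialize (H3 c (s + h) Hcx Hsh). fold D0 in H3. unfold dx in H3.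
  simpl. fold x0.
  replace ((u (X (s + h)) (s + h) - u x0 s) / h - (D0 * X' + T0))
    with ((Derive (fun y : R => u y (s + h)) c - D0) * Q + D0 * (Q - X') + (Rq - T0)).
  2:{ unfold Q, Rq. replace (u (X (s + h)) (s + h) - u x0 s) with
        ((u (X (s + h)) (s + h) - u x0 (s+h)) + (u x0 (s + h) - u x0 s)) by ring.
      rewrite Hm. field. auto. }
  eapply Rle_lt_trans; [apply Rabs_triang|].
  eapply Rle_lt_trans; [apply Rplus_le_compat_r, Rabs_triang|].
  rewrite !Rabs_mult.
  assert (A1 : Rabs (Derive (fun y : R => u y (s + h)) c - D0) * Rabs Q <= eta * L).
  { apply Rmult_le_compat; try apply Rabs_pos; lra. }
  assert (A2 : Rabs D0 * Rabs (Q - X') <= Rabs D0 * eta).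
  { apply Rmult_le_compat_l; [apply Rabs_pos| lra]. }
  assert (eta * L + Rabs D0 * eta + eta = eta * K) by (unfold L, K; ring).
  assert (eta * K < eps \/ eta * K = eps) by lra.
  (* strictness: H2 is strict *)
  lra.
Qed.

Definition Phi (sg tau xi : R) := xi * exp (sg * tau) / (1 - xi + xi * exp (sg * tau)).

Lemma Phi_den sg tau xi : 0 <= xi <= 1 -> 0 < 1 - xi + xi * exp (sg * tau).
Proof.
  intros H. pose proof (exp_pos (sg * tau)).
  destruct (Req_dec xi 0). subst. lra.
  assert (0 < xi * exp (sg * tau)) by (apply Rmult_lt_0_compat; lra). lra.
Qed.

Lemma Phi_der sg s xi : 0 <= xi <= 1 ->
  is_derive (fun t => Phi sg (t - s) xi) s (sg * xi * (1 - xi)).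
Proof.
  intros H. unfold Phi. pose proof (Phi_den sg 0 xi H).
  auto_derive.
  - rewrite Rplus_opp_r. lra.
  - rewrite Rplus_opp_r. rewrite Rmult_0_r, exp_0 in *. field. lra.
Qed.

Lemma Phi_0 sg xi : Phi sg 0 xi = xi.
Proof. unfold Phi. rewrite Rmult_0_r, exp_0. field_simplify; [reflexivity|]. replace (1 - xi + xi) with 1 by ring. lra. Qed.

Lemma Phi_range sg tau xi : 0 <= xi <= 1 -> 0 <= Phi sg tau xi <= 1.
Proof.
  intros H. unfold Phi. pose proof (Phi_den sg tau xi H). pose proof (exp_pos (sg*tau)).
  split.
  - apply Rmult_le_pos. apply Rmult_le_pos; lra. left; apply Rinv_0_lt_compat; lra.
  - apply (Rmult_le_reg_r (1 - xi + xi * exp (sg * tau))); auto.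
    unfold Rdiv. rewrite Rmult_assoc, Rinv_l by lra. lra.
Qed.

Lemma Phi_mono sg tau x y : 0 <= x -> x <= y -> y <= 1 -> Phi sg tau x <= Phi sg tau y.
Proof.
  intros H1 H2 H3. unfold Phi. pose proof (Phi_den sg tau x ltac:(lra)).
  pose proof (Phi_den sg tau y ltac:(lra)). pose proof (exp_pos (sg*tau)).
  set (e := exp (sg * tau)) in *.
  apply (Rmult_le_reg_r ((1 - x + x * e) * (1 - y + y * e))). apply Rmult_lt_0_compat; auto.
  replace (x * e / (1 - x + x * e) * ((1 - x + x * e) * (1 - y + y * e))) with (x * e * (1 - y + y * e)) by (field; lra).
  replace (y * e / (1 - y + y * e) * ((1 - x + x * e) * (1 - y + y * e))) with (y * e * (1 - x + x * e)) by (field; lra).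
  assert (x * (1 - y) <= y * (1 - x)) by nra.
  nra.
Qed.

Definition Gf (bt c x t : R) := -2 * exp (- bt * t) * ln (1 - x + exp (- c * t)).
Definition Gx (bt c x t : R) := 2 * exp (- bt * t) / (1 - x + exp (- c * t)).
Definition Gt (bt c x t : R) :=
  2 * exp (- bt * t) * (bt * ln (1 - x + exp (- c * t)) + c * exp (- c * t) / (1 - x + exp (- c * t))).

Lemma Gx_der bt c x t : x <= 1 -> is_derive (fun y => Gf bt c y t) x (Gx bt c x t).
Proof.
  intros H. unfold Gf, Gx. pose proof (exp_pos (- c * t)).
  auto_derive. lra. field. lra.
Qed.

Lemma G_char bt c sg s xi : 0 <= xi <= 1 ->
  is_derive (fun t => Gf bt c (Phi sg (t - s) xi) t) s (Gt bt c xi s + sg * xi * (1 - xi) * Gx bt c xi s).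
Proof.
  intros H. unfold Gf, Gt, Gx, Phi. pose proof (Phi_den sg 0 xi H).
  rewrite Rmult_0_r, exp_0 in H0.
  pose proof (exp_pos (- c * s)).
  assert (Hp : 0 < 1 - xi * 1 / (1 - xi + xi * 1) + exp (- c * s)).
  { replace (1 - xi * 1 / (1 - xi + xi * 1)) with (1 - xi) by (field; lra). lra. }
  auto_derive.
  - rewrite Rplus_opp_r, Rmult_0_r, exp_0. split; [lra|split; [lra|exact I]].
  - rewrite Rplus_opp_r, Rmult_0_r, exp_0.
    replace (1 + - (xi * 1 * / (1 - xi + xi * 1)) + exp (- c * s)) with (1 - xi + exp (- c * s)) by (field; lra).
    field. split; lra.
Qed.

Definition Bf (sg a b g0 g1 c bt t xi : R) :=
  bt * ln (1 - xi + exp (- c * t)) + c * exp (- c * t) / (1 - xi + exp (- c * t))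
  + sg * xi * (1 - xi) / (1 - xi + exp (- c * t))
  + a * (ln (1 - (xi + g0 * (1 - xi)) + exp (- c * t)) - ln (1 - xi + exp (- c * t)))
  + b * (ln (1 - (xi - g1 * xi) + exp (- c * t)) - ln (1 - xi + exp (- c * t))).

Definition Bd (sg a b g0 g1 c bt t xi : R) :=
  - bt / (1 - xi + exp (- c * t)) + c * exp (- c * t) / (1 - xi + exp (- c * t))^2
  + sg * ((1 - 2 * xi) * (1 - xi + exp (- c * t)) + xi * (1 - xi)) / (1 - xi + exp (- c * t))^2
  + a * (1 / (1 - xi + exp (- c * t)) - (1 - g0) / (1 - (xi + g0 * (1 - xi)) + exp (- c * t)))
  + b * (1 / (1 - xi + exp (- c * t)) - (1 - g1) / (1 - (xi - g1 * xi) + exp (- c * t))).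

Lemma Bf_der sg a b g0 g1 c bt t xi : 0 <= xi <= 1 -> 0 <= g0 <= 1 -> 0 <= g1 <= 1 ->
  is_derive (Bf sg a b g0 g1 c bt t) xi (Bd sg a b g0 g1 c bt t xi).
Proof.
  intros Hx H0 H1. unfold Bf, Bd. pose proof (exp_pos (- c * t)).
  set (E := exp (- c * t)) in *.
  assert (0 < 1 - xi + E) by lra.
  assert (0 < 1 - (xi + g0 * (1 - xi)) + E) by nra.
  assert (0 < 1 - (xi - g1 * xi) + E) by nra.
  auto_derive.
  - repeat split; lra.
  - field. repeat split; lra.
Qed.

Lemma Bd_nonneg sg a b g0 g1 c bt t xi : 0 <= xi <= 1 -> 0 <= g0 <= 1 -> 0 <= g1 <= 1 ->
  0 < sg -> 0 <= a -> 0 <= b -> bt = b * g1 -> c = sg - a * g0 ->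
  0 <= Bd sg a b g0 g1 c bt t xi.
Proof.
  intros Hx H0 H1 Hs Ha Hb Hbt Hc. unfold Bd. pose proof (exp_pos (- c * t)).
  set (E := exp (- c * t)) in *.
  assert (Hq : 0 < 1 - xi + E) by lra.
  assert (Hq0 : 0 < 1 - (xi + g0 * (1 - xi)) + E) by nra.
  assert (Hq1 : 0 < 1 - (xi - g1 * xi) + E) by nra.
  set (q := 1 - xi + E) in *. set (q0 := 1 - (xi + g0 * (1 - xi)) + E) in *.
  set (q1 := 1 - (xi - g1 * xi) + E) in *.
  assert (Eq : - bt / q + c * E / q ^ 2 + sg * ((1 - 2 * xi) * q + xi * (1 - xi)) / q ^ 2 +
    a * (1 / q - (1 - g0) / q0) + b * (1 / q - (1 - g1) / q1) =
    (sg * (1 - xi)^2 + 2 * sg * E * (1 - xi)) / q^2 + a * g0 * E * g0 * (1 - xi) / (q^2 * q0)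
    + b * g1 * xi * (1 - g1) / (q * q1)).
  { subst bt c. unfold q, q0, q1 in *. field. repeat split; lra. }
  rewrite Eq.
  assert (0 <= (sg * (1 - xi)^2 + 2 * sg * E * (1 - xi)) / q^2).
  { apply Rdiv_le_0_compat. 2: nra. assert (0 <= sg * E * (1 - xi)).
    apply Rmult_le_pos; [|lra]. apply Rmult_le_pos; lra. nra. }
  assert (0 <= a * g0 * E * g0 * (1 - xi) / (q^2 * q0)).
  { apply Rdiv_le_0_compat. 2: apply Rmult_lt_0_compat; nra.
    repeat apply Rmult_le_pos; lra. }
  assert (0 <= b * g1 * xi * (1 - g1) / (q * q1)).
  { apply Rdiv_le_0_compat. 2: apply Rmult_lt_0_compat; nra.
    repeat apply Rmult_le_pos; lra. }
  lra.
Qed.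

Lemma Bf_mono sg a b g0 g1 c bt t x y : 0 <= x -> x <= y -> y <= 1 -> 0 <= g0 <= 1 -> 0 <= g1 <= 1 ->
  0 < sg -> 0 <= a -> 0 <= b -> bt = b * g1 -> c = sg - a * g0 ->
  Bf sg a b g0 g1 c bt t x <= Bf sg a b g0 g1 c bt t y.
Proof.
  intros. destruct (MVT_gen (Bf sg a b g0 g1 c bt t) x y (Bd sg a b g0 g1 c bt t)) as [z [Hz Hm]].
  - intros z Hz. rewrite Rmin_left, Rmax_right in Hz by lra. apply Bf_der; auto; lra.
  - intros z Hz. rewrite Rmin_left, Rmax_right in Hz by lra. apply exd_cont.
    eexists. apply Bf_der; auto; lra.
  - rewrite Rmin_left, Rmax_right in Hz by lra.
    assert (0 <= Bd sg a b g0 g1 c bt t z) by (apply Bd_nonneg; auto; lra).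
    assert (0 <= Bd sg a b g0 g1 c bt t z * (y - x)) by (apply Rmult_le_pos; lra).
    lra.
Qed.

Lemma S_eq sg a b g0 g1 c bt t xi : 0 <= xi <= 1 -> 0 <= g0 <= 1 -> 0 <= g1 <= 1 ->
  Gt bt c xi t + sg * (1 - xi) * xi * Gx bt c xi t
  - a * (Gf bt c (xi + g0 * (1 - xi)) t - Gf bt c xi t)
  - b * (Gf bt c (xi - g1 * xi) t - Gf bt c xi t)
  = 2 * exp (- bt * t) * Bf sg a b g0 g1 c bt t xi.
Proof.
  intros Hx H0 H1. unfold Gt, Gx, Gf, Bf. pose proof (exp_pos (- c * t)).
  set (E := exp (- c * t)) in *.
  assert (0 < 1 - xi + E) by lra.
  field. lra.
Qed.

Lemma c2_snd (f : R -> R -> R) x y : continuity_2d_pt f x y -> continuity_pt (fun w => f x w) y.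
Proof.
  intros H. apply ed_cpt. intros eps He. destruct (c2_ed f x y H eps He) as [d [Hd H']].
  exists d; split; auto. intros w Hw. apply H'; auto. rewrite Rminus_diag, Rabs_R0; auto.
Qed.

Lemma c2_fst (f : R -> R -> R) x y : continuity_2d_pt f x y -> continuity_pt (fun w => f w y) x.
Proof.
  intros H. apply ed_cpt. intros eps He. destruct (c2_ed f x y H eps He) as [d [Hd H']].
  exists d; split; auto. intros w Hw. apply H'; auto. rewrite Rminus_diag, Rabs_R0; auto.
Qed.

Definition clamp z := Rmax 0 (Rmin 1 z).

Lemma clamp_range z : 0 <= clamp z <= 1.
Proof. unfold clamp, Rmax, Rmin. repeat destruct Rle_dec; lra. Qed.

Lemma clamp_id z : 0 <= z <= 1 -> clamp z = z.
Proof. unfold clamp, Rmax, Rmin. repeat destruct Rle_dec; lra. Qed.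

Lemma clamp_lip a b : Rabs (clamp a - clamp b) <= Rabs (a - b).
Proof. unfold clamp, Rmax, Rmin. repeat destruct Rle_dec; unfold Rabs; repeat destruct Rcase_abs; lra. Qed.

Lemma evt2 (h : R -> R -> R) :
  (forall x y, 0 <= x <= 1 -> 0 <= y <= 1 -> continuity_2d_pt h x y) ->
  exists x0 y0, 0 <= x0 <= 1 /\ 0 <= y0 <= 1 /\
    forall x y, 0 <= x <= 1 -> 0 <= y <= 1 -> h x0 y0 <= h x y.
Proof.
  intros Hc.
  assert (Hex : forall z, exists y, 0 <= y <= 1 /\ forall w, 0 <= w <= 1 -> h (clamp z) y <= h (clamp z) w).
  { intros z. destruct (continuity_ab_min (fun w => h (clamp z) w) 0 1 ltac:(lra)) as [y [H1 H2]].
    - intros w Hw. apply c2_snd. apply Hc; auto. apply clamp_range.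
    - exists y; split; auto. }
  pose (Y z := proj1_sig (constructive_indefinite_description _ (Hex z))).
  assert (HY : forall z, 0 <= Y z <= 1 /\ forall w, 0 <= w <= 1 -> h (clamp z) (Y z) <= h (clamp z) w).
  { intros z. unfold Y. destruct (constructive_indefinite_description _ (Hex z)) as [y Hy]. exact Hy. }
  pose (m z := h (clamp z) (Y z)).
  assert (Hm : forall z, continuity_pt m z).
  { intros z0. apply ed_cpt. intros eta Heta.
    destruct (uniform_continuity_2d h 0 1 0 1 ltac:(intros; apply Hc; auto) (mkposreal eta Heta)) as [d Hd].
    exists d; split; [apply cond_pos|]. intros z Hz.
    pose proof (clamp_lip z z0). pose proof (clamp_range z). pose proof (clamp_range z0).
    destruct (HY z) as [Hy1 Hy2]. destruct (HY z0) as [Hy01 Hy02].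
    assert (A1 : Rabs (h (clamp z) (Y z0) - h (clamp z0) (Y z0)) < eta).
    { apply (Hd (clamp z0) (Y z0) (clamp z) (Y z0)); auto. lra. rewrite Rminus_diag, Rabs_R0; apply cond_pos. }
    assert (A2 : Rabs (h (clamp z0) (Y z) - h (clamp z) (Y z)) < eta).
    { apply (Hd (clamp z) (Y z) (clamp z0) (Y z)); auto. rewrite Rabs_minus_sym. lra. rewrite Rminus_diag, Rabs_R0; apply cond_pos. }
    specialize (Hy2 (Y z0) Hy01). specialize (Hy02 (Y z) Hy1).
    unfold m. apply Rabs_def1; apply Rabs_def2 in A1; apply Rabs_def2 in A2; lra. }
  destruct (continuity_ab_min m 0 1 ltac:(lra) (fun c _ => Hm c)) as [x0 [H2 H1]].
  exists x0, (Y x0). split; auto. split; [apply HY|].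
  intros x y Hx Hy. specialize (H2 x Hx). unfold m in H2. rewrite !clamp_id in H2 by auto.
  destruct (HY x) as [_ HYx]. rewrite clamp_id in HYx by auto. specialize (HYx y Hy). lra.
Qed.

Lemma quot_pick f s D : derivable_pt_lim f s D -> forall d eps, 0 < d -> 0 < eps ->
  exists k, 0 < k < d /\ Rabs ((f (s + k) - f s) / k - D) < eps
           /\ Rabs ((f (s + - k) - f s) / - k - D) < eps.
Proof.
  intros H d eps Hd He. destruct (H eps He) as [d' Hd'].
  set (k := Rmin d d' / 2).
  assert (Hk : 0 < k) by (unfold k; apply Rdiv_lt_0_compat; [apply Rmin_pos; [lra|apply cond_pos]|lra]).
  assert (Hk1 : k < d) by (unfold k; pose proof (Rmin_l d d'); lra).
  assert (Hk2 : k < d') by (unfold k; pose proof (Rmin_r d d'); pose proof (cond_pos d'); lra).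
  exists k. split; [lra|split].
  - apply Hd'. lra. rewrite Rabs_pos_eq; lra.
  - apply Hd'. lra. rewrite Rabs_Ropp, Rabs_pos_eq; lra.
Qed.

Lemma der_left_neg f s D d : is_derive f s D -> 0 < d ->
  (forall t, s - d < t < s -> f s < f t) -> D <= 0.
Proof.
  intros H Hd Hl. apply is_derive_Reals in H. destruct (Rle_dec D 0) as [|Hn]; auto.
  exfalso. destruct (quot_pick f s D H d (D/2) Hd ltac:(lra)) as [k [Hk [_ Hq]]].
  specialize (Hl (s + - k) ltac:(lra)).
  apply Rabs_def2 in Hq. destruct Hq as [_ Hq].
  set (Q := (f (s + - k) - f s) / - k) in *.
  assert (Q * (- k) = f (s + - k) - f s) by (unfold Q; field; lra).
  nra.
Qed.

Lemma der_right_pos f s D d : is_derive f s D -> 0 < d ->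
  (forall k, 0 < k < d -> f s <= f (s + k)) -> 0 <= D.
Proof.
  intros H Hd Hl. apply is_derive_Reals in H. destruct (Rle_dec 0 D) as [|Hn]; auto.
  exfalso. destruct (quot_pick f s D H d (- D/2) Hd ltac:(lra)) as [k [Hk [Hq _]]].
  specialize (Hl k Hk).
  apply Rabs_def2 in Hq. destruct Hq as [Hq _].
  set (Q := (f (s + k) - f s) / k) in *.
  assert (Q * k = f (s + k) - f s) by (unfold Q; field; lra).
  nra.
Qed.

Lemma der_leftw_pos f s D d : is_derive f s D -> 0 < d ->
  (forall k, 0 < k < d -> f (s + - k) <= f s) -> 0 <= D.
Proof.
  intros H Hd Hl. apply is_derive_Reals in H. destruct (Rle_dec 0 D) as [|Hn]; auto.
  exfalso. destruct (quot_pick f s D H d (- D/2) Hd ltac:(lra)) as [k [Hk [_ Hq]]].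
  specialize (Hl k Hk).
  apply Rabs_def2 in Hq. destruct Hq as [Hq _].
  set (Q := (f (s + - k) - f s) / - k) in *.
  assert (Q * (- k) = f (s + - k) - f s) by (unfold Q; field; lra).
  nra.
Qed.

Lemma cpt_c2_snd (g : R -> R) x t : continuity_pt g t -> continuity_2d_pt (fun _ v => g v) x t.
Proof.
  intros H. apply ed_c2. intros eps He. destruct (cpt_ed g t H eps He) as [d [Hd H']].
  exists d; split; auto.
Qed.

Lemma Gf_cont bt c x t : x <= 1 -> continuity_2d_pt (Gf bt c) x t.
Proof.
  intros Hx. unfold Gf.
  apply continuity_2d_pt_mult.
  - apply cpt_c2_snd. apply exd_cont. auto_derive. exact I.
  - apply (continuity_1d_2d_pt_comp ln (fun u v => 1 - u + exp (- c * v))).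
    + pose proof (exp_pos (- c * t)). apply exd_cont. eexists. apply is_derive_Reals.
      apply derivable_pt_lim_ln. lra.
    + apply continuity_2d_pt_plus.
      * apply continuity_2d_pt_minus. apply continuity_2d_pt_const. apply continuity_2d_pt_id1.
      * apply cpt_c2_snd. apply exd_cont. auto_derive. exact I.
Qed.

Lemma base_mono bt c x y : 0 <= x -> x <= y -> y <= 1 ->
  Gf bt c x 0 - x <= Gf bt c y 0 - y.
Proof.
  intros. destruct (MVT_gen (fun z => Gf bt c z 0 - z) x y (fun z => Gx bt c z 0 - 1)) as [z [Hz Hm]].
  - intros z Hz. rewrite Rmin_left, Rmax_right in Hz by lra.
    apply (is_derive_minus (fun z => Gf bt c z 0) (fun z => z)). apply Gx_der; lra.
    auto_derive; [exact I| first [ring | reflexivity]].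
  - intros z Hz. rewrite Rmin_left, Rmax_right in Hz by lra. apply exd_cont. eexists.
    apply (is_derive_minus (fun z => Gf bt c z 0) (fun z => z)). apply Gx_der; lra.
    auto_derive; [exact I| first [ring | reflexivity]].
  - rewrite Rmin_left, Rmax_right in Hz by lra.
    assert (0 <= Gx bt c z 0 - 1).
    { unfold Gx. rewrite !Rmult_0_r, exp_0. apply (Rmult_le_reg_r (1 - z + 1)). lra.
      unfold Rdiv. rewrite Rmult_minus_distr_r, Rmult_assoc, Rinv_l by lra. lra. }
    assert (0 <= (Gx bt c z 0 - 1) * (y - x)) by (apply Rmult_le_pos; lra).
    simpl in Hm. lra.
Qed.

Lemma Rmax_c2 x y : continuity_2d_pt Rmax x y.
Proof.
  apply ed_c2. intros eps He. exists eps; split; auto. intros u v Hu Hv.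
  unfold Rmax. repeat destruct Rle_dec; unfold Rabs in *; repeat destruct Rcase_abs; lra.
Qed.

Definition FF (c bt : R) (u : R -> R -> R) x t := Gf bt c x t - u x t.

Definition Hyps (sg a b g0 g1 c bt : R) (u : R -> R -> R) : Prop :=
  0 < sg /\ 0 <= a /\ 0 <= b /\ (0 <= g0 <= 1) /\ (0 <= g1 <= 1) /\
  bt = b * g1 /\ c = sg - a * g0 /\ C1_2 u /\
  (forall x, 0 <= x <= 1 -> u x 0 = x) /\
  (forall x t, 0 <= x <= 1 -> 0 < t ->
     dt u x t + sg * (1 - x) * x * dx u x t = a * J0 g0 u x t + b * J1 g1 u x t).


Lemma FF_char sg a b g0 g1 c bt u (HH : Hyps sg a b g0 g1 c bt u) xi s : 0 <= xi <= 1 -> 0 < s ->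
  is_derive (fun t => FF c bt u (Phi sg (t - s) xi) t) s
    (2 * exp (- bt * s) * Bf sg a b g0 g1 c bt s xi
     + a * (FF c bt u (xi + g0 * (1 - xi)) s - FF c bt u xi s) + b * (FF c bt u (xi - g1 * xi) s - FF c bt u xi s)).
Proof.
  destruct HH as (Hsg & Ha & Hb & Hg0 & Hg1 & Hbt & Hc & HC & Hinit & Hpde).
  intros Hx Hs.
  pose proof (G_char bt c sg s xi Hx) as H1.
  pose proof (chain u (fun t => Phi sg (t - s) xi) s (sg * xi * (1 - xi)) HC (Phi_der sg s xi Hx)) as H2.
  simpl in H2. replace (s - s) with 0 in H2 by ring. rewrite Phi_0 in H2.
  pose proof (is_derive_minus _ _ _ _ _ H1 H2) as H3.
  rewrite <- (S_eq sg a b g0 g1 c bt s xi Hx Hg0 Hg1).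
  assert (Hd : dt u xi s = a * J0 g0 u xi s + b * J1 g1 u xi s - sg * (1 - xi) * xi * dx u xi s)
    by (specialize (Hpde xi s Hx Hs); lra).
  unfold FF.
  match goal with |- is_derive _ _ ?L => replace L with
    (Gt bt c xi s + sg * xi * (1 - xi) * Gx bt c xi s -
       (dx u xi s * (sg * xi * (1 - xi)) + dt u xi s)) end.
  exact H3.
  rewrite Hd. unfold J0, J1. ring.
Qed.

Lemma key sg a b g0 g1 c bt u (HH : Hyps sg a b g0 g1 c bt u) T eps : 0 <= T -> 0 < eps -> forall x y, 0 <= x -> x <= y -> y <= 1 ->
  0 < FF c bt u y T - FF c bt u x T + eps * (1 + T).
Proof.
  pose proof HH as HH0.
  destruct HH as (Hsg & Ha & Hb & Hg0 & Hg1 & Hbt & Hc & HC & Hinit & Hpde).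
  intros HT He.
  set (V x y t := FF c bt u y t - FF c bt u x t + eps * (1 + t)).
  assert (Fc : forall x t, x <= 1 -> continuity_2d_pt (FF c bt u) x t).
  { intros x t Hx. apply continuity_2d_pt_minus. apply Gf_cont; auto. apply u_cont; auto. }
  assert (UC : forall eta, 0 < eta -> exists d, 0 < d /\ forall x t x' t', 0 <= x <= 1 -> 0 <= t <= T ->
     0 <= x' <= 1 -> 0 <= t' <= T -> Rabs (x' - x) < d -> Rabs (t' - t) < d ->
     Rabs (FF c bt u x' t' - FF c bt u x t) < eta).
  { intros eta Heta. destruct (uniform_continuity_2d (FF c bt u) 0 1 0 T ltac:(intros; apply Fc; lra) (mkposreal eta Heta)) as [d Hd].
    exists d. split; [apply cond_pos|]. intros. apply Hd; auto. }
  set (Good s := forall t, 0 <= t <= s -> forall x y, 0 <= x -> x <= y -> y <= 1 -> 0 < V x y t).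
  assert (Base : forall x y, 0 <= x -> x <= y -> y <= 1 -> 0 < V x y 0).
  { intros x y H1 H2 H3. unfold V, FF. rewrite !Hinit by lra.
    pose proof (base_mono bt c x y H1 H2 H3). lra. }
  set (Es s := 0 <= s <= T /\ Good s).
  assert (HG0 : Es 0).
  { split; [lra|]. intros t Ht. replace t with 0 by lra. exact Base. }
  destruct (completeness Es) as [ss [Hub Hlub]].
  { exists T. intros s [Hs _]. lra. }
  { exists 0; exact HG0. }
  assert (Hss0 : 0 <= ss) by (apply Hub; exact HG0).
  assert (HssT : ss <= T) by (apply Hlub; intros s [Hs _]; lra).
  assert (Below : forall t, 0 <= t < ss -> forall x y, 0 <= x -> x <= y -> y <= 1 -> 0 < V x y t).
  { intros t Ht. destruct (classic (exists s, Es s /\ t < s)) as [[s [[_ Hs] Hts]]|Hn].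
    - apply Hs; lra.
    - exfalso. assert (ss <= t); [|lra]. apply Hlub. intros s Hs.
      destruct (Rle_dec s t); auto. exfalso. apply Hn. exists s; split; auto; lra. }
  assert (AtS : forall x y, 0 <= x -> x <= y -> y <= 1 -> 0 <= V x y ss).
  { intros x y H1 H2 H3. destruct (Req_dec ss 0) as [Hz|Hz].
    { rewrite Hz. left; apply Base; auto. }
    destruct (Rle_dec 0 (V x y ss)) as [|Hn]; auto. exfalso.
    set (w := - V x y ss). assert (Hw : 0 < w) by (unfold w; lra).
    destruct (UC (w/4) ltac:(lra)) as [d [Hd Hd']].
    set (t := Rmax 0 (ss - d/2)).
    assert (Ht : 0 <= t < ss /\ Rabs (t - ss) < d).
    { unfold t, Rmax. destruct Rle_dec; split; try (unfold Rabs; destruct Rcase_abs); lra. }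
    pose proof (Below t ltac:(lra) x y H1 H2 H3).
    assert (A1 := Hd' y ss y t ltac:(lra) ltac:(lra) ltac:(lra) ltac:(lra) ltac:(rewrite Rminus_diag, Rabs_R0; lra) ltac:(lra)).
    assert (A2 := Hd' x ss x t ltac:(lra) ltac:(lra) ltac:(lra) ltac:(lra) ltac:(rewrite Rminus_diag, Rabs_R0; lra) ltac:(lra)).
    apply Rabs_def2 in A1. apply Rabs_def2 in A2. unfold w, V in *. cbv beta in *.
    assert (eps * (1 + t) <= eps * (1 + ss)) by (apply Rmult_le_compat_l; lra).
    lra. }
  assert (Hmin : exists px py, 0 <= px /\ px <= py /\ py <= 1 /\
     forall x y, 0 <= x -> x <= y -> y <= 1 -> V px py ss <= V x y ss).
  { destruct (evt2 (fun x y => V x (Rmax x y) ss)) as [x0 [y0 [Hx0 [Hy0 Hm]]]].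
    - intros x y Hx Hy. unfold V.
      apply continuity_2d_pt_plus. apply continuity_2d_pt_minus.
      + apply (continuity_1d_2d_pt_comp (fun z => FF c bt u z ss) Rmax).
        apply c2_fst. apply Fc. unfold Rmax; destruct Rle_dec; lra. apply Rmax_c2.
      + apply (continuity_1d_2d_pt_comp (fun z => FF c bt u z ss) (fun u0 v => u0)).
        apply c2_fst. apply Fc. lra. apply continuity_2d_pt_id1.
      + apply continuity_2d_pt_const.
    - exists x0, (Rmax x0 y0). split; [lra|]. split; [apply Rmax_l|].
      split; [unfold Rmax; destruct Rle_dec; lra|].
      intros x y H1 H2 H3. specialize (Hm x y ltac:(lra) ltac:(lra)). cbv beta in Hm.
      rewrite (Rmax_right x y) in Hm by lra. exact Hm. }
  destruct Hmin as [px [py [Hp1 [Hp2 [Hp3 Hpm]]]]].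
  pose proof (AtS px py Hp1 Hp2 Hp3) as Hp0.
  destruct Hp0 as [Hpos|Hzero].
  -
    set (m := V px py ss) in *.
    destruct (UC (m/4) ltac:(lra)) as [d [Hd Hd']].
    set (s1 := Rmin T (ss + d/2)).
    assert (Good1 : Good s1).
    { intros t Ht x y H1 H2 H3.
      destruct (Rlt_dec t ss) as [Hlt|Hge].
      - apply Below; auto; lra.
      - assert (Hts : ss <= t <= T /\ Rabs (t - ss) < d).
        { unfold s1, Rmin in Ht. destruct Rle_dec; split; try (unfold Rabs; destruct Rcase_abs); lra. }
        assert (A1 := Hd' y ss y t ltac:(lra) ltac:(lra) ltac:(lra) ltac:(lra) ltac:(rewrite Rminus_diag, Rabs_R0; lra) ltac:(lra)).
        assert (A2 := Hd' x ss x t ltac:(lra) ltac:(lra) ltac:(lra) ltac:(lra) ltac:(rewrite Rminus_diag, Rabs_R0; lra) ltac:(lra)).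
        apply Rabs_def2 in A1. apply Rabs_def2 in A2.
        specialize (Hpm x y H1 H2 H3). unfold m, V in *. cbv beta in *.
        assert (eps * (1 + ss) <= eps * (1 + t)) by (apply Rmult_le_compat_l; lra).
        lra. }
    assert (Hs1 : Es s1).
    { split; [unfold s1, Rmin; destruct Rle_dec; lra| exact Good1]. }
    assert (s1 <= ss) by (apply Hub; exact Hs1).
    assert (s1 = T) by (unfold s1, Rmin in *; destruct Rle_dec; lra).
    intros x y H1 H2 H3. apply (Good1 T ltac:(lra) x y H1 H2 H3).
  -
    exfalso.
    destruct (Req_dec ss 0) as [Hz|Hz].
    { pose proof (Base px py Hp1 Hp2 Hp3). rewrite Hz in Hzero. lra. }
    assert (Hsp : 0 < ss) by lra.
    set (f t := V (Phi sg (t - ss) px) (Phi sg (t - ss) py) t).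
    set (D := (2 * exp (- bt * ss) * Bf sg a b g0 g1 c bt ss py
     + a * (FF c bt u (py + g0 * (1 - py)) ss - FF c bt u py ss) + b * (FF c bt u (py - g1 * py) ss - FF c bt u py ss))
     - (2 * exp (- bt * ss) * Bf sg a b g0 g1 c bt ss px
     + a * (FF c bt u (px + g0 * (1 - px)) ss - FF c bt u px ss) + b * (FF c bt u (px - g1 * px) ss - FF c bt u px ss))
     + eps).
    assert (Hf : is_derive f ss D).
    { assert (Hg : is_derive (fun t => eps * (1 + t)) ss eps) by (auto_derive; [exact I| ring]).
      pose proof (is_derive_plus _ _ _ _ _ (is_derive_minus _ _ _ _ _
        (FF_char sg a b g0 g1 c bt u HH0 py ss ltac:(lra) Hsp) (FF_char sg a b g0 g1 c bt u HH0 px ss ltac:(lra) Hsp)) Hg) as HH.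
      exact HH. }
    assert (HD : D <= 0).
    { apply (der_left_neg f ss D ss Hf Hsp). intros t Ht.
      unfold f. replace (ss - ss) with 0 by ring. rewrite !Phi_0. rewrite <- Hzero.
      pose proof (Phi_range sg (t - ss) px ltac:(lra)).
      pose proof (Phi_range sg (t - ss) py ltac:(lra)).
      pose proof (Phi_mono sg (t - ss) px py Hp1 Hp2 Hp3).
      apply Below; lra. }
    assert (HB := Bf_mono sg a b g0 g1 c bt ss px py Hp1 Hp2 Hp3 Hg0 Hg1 Hsg Ha Hb Hbt Hc).
    assert (HJ0 := Hpm (px + g0 * (1 - px)) (py + g0 * (1 - py)) ltac:(nra) ltac:(nra) ltac:(nra)).
    assert (HJ1 := Hpm (px - g1 * px) (py - g1 * py) ltac:(nra) ltac:(nra) ltac:(nra)).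
    unfold V in HJ0, HJ1, Hzero. cbv beta in HJ0, HJ1, Hzero.
    assert (0 <= 2 * exp (- bt * ss) * (Bf sg a b g0 g1 c bt ss py - Bf sg a b g0 g1 c bt ss px)).
    { apply Rmult_le_pos. pose proof (exp_pos (- bt * ss)); lra. lra. }
    assert (0 <= a * ((FF c bt u (py + g0 * (1 - py)) ss - FF c bt u (px + g0 * (1 - px)) ss) - (FF c bt u py ss - FF c bt u px ss))).
    { apply Rmult_le_pos; lra. }
    assert (0 <= b * ((FF c bt u (py - g1 * py) ss - FF c bt u (px - g1 * px) ss) - (FF c bt u py ss - FF c bt u px ss))).
    { apply Rmult_le_pos; lra. }
    unfold D in HD. nra.
Qed.


Theorem lemma4p5 (f0 f1 l0 l1 g0 g1 : R) (u : R -> R -> R) :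
  0 < f0 -> 0 <= f1 -> 0 < f0 - f1 ->
  0 <= l0 -> 0 <= l1 ->
  0 < g0 <= 1 -> 0 < g1 <= 1 ->
  is_solution f0 f1 l0 l1 g0 g1 u ->
  (f0 - f1) >= (l0 * g0) * f0 + (l1 * g1) * f1 ->
  forall x t : R, 0 <= x <= 1 -> 0 <= t ->
    dx u x t <=
      2 / (1 - x + exp (- ((f0 - f1) - (l0 * g0) * f0) * t))
        * exp (- ((l1 * g1) * f1) * t).
Proof.
  intros Hf0 Hf1 Hsg Hl0 Hl1 Hg0 Hg1 [HC [Hinit Hpde]] _ x t Hx Ht.
  set (c := (f0 - f1) - (l0 * g0) * f0).
  set (bt := (l1 * g1) * f1).
  assert (Hmono : forall y z, 0 <= y -> y <= z -> z <= 1 -> FF c bt u y t <= FF c bt u z t).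
  { intros y z H1 H2 H3.
    destruct (Rle_dec (FF c bt u y t) (FF c bt u z t)) as [|Hn]; auto. exfalso.
    set (w := FF c bt u y t - FF c bt u z t).
    assert (Hw : 0 < w) by (unfold w; lra).
    assert (HH : Hyps (f0 - f1) (l0 * f0) (l1 * f1) g0 g1 c bt u).
    { split; [lra|]. split; [apply Rmult_le_pos; lra|]. split; [apply Rmult_le_pos; lra|].
      split; [lra|]. split; [lra|]. split; [unfold bt; ring|]. split; [unfold c; ring|].
      split; [exact HC|]. split; [exact Hinit| exact Hpde]. }
    assert (Hk := key (f0 - f1) (l0 * f0) (l1 * f1) g0 g1 c bt u HH t (w / (2 * (1 + t))) Ht
      ltac:(apply Rdiv_lt_0_compat; lra) y z H1 H2 H3).
    replace (w / (2 * (1 + t)) * (1 + t)) with (w / 2) in Hk by (field; lra).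
    unfold w in *. lra. }
  assert (Hd : is_derive (fun z => FF c bt u z t) x (Gx bt c x t - dx u x t)).
  { apply (is_derive_minus (fun z => Gf bt c z t) (fun z => u z t)).
    apply Gx_der; lra. apply Derive_correct. apply (HC x t). }
  assert (Hpos : 0 <= Gx bt c x t - dx u x t).
  { destruct (Req_dec x 1) as [Hx1|Hx1].
    - apply (der_leftw_pos _ x _ 1 Hd Rlt_0_1). intros k Hk. apply Hmono; lra.
    - apply (der_right_pos _ x _ (1 - x) Hd ltac:(lra)). intros k Hk. apply Hmono; lra. }
  unfold Gx in Hpos. fold c bt.
  pose proof (exp_pos (- c * t)).
  replace (2 / (1 - x + exp (- c * t)) * exp (- bt * t)) with (2 * exp (- bt * t) / (1 - x + exp (- c * t)))
    by (field; lra).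
  lra.
Qed.
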